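(* Let $n,k$ be integers with $2\le 2k\le n-4$. Let $\eta=(\eta_1<\dots<\eta_l)\in\overline{\mathbb{D}}^{\,\mathrm{o}}_{2k+2}$, where $\overline{\mathbb{D}}^{\,\mathrm{o}}_{2k+2}=\mathbb{D}^{\,\mathrm{o}}_{2k+2}\setminus\{(1,2k+1)\}$ if $2k=n-4$ and $\overline{\mathbb{D}}^{\,\mathrm{o}}_{2k+2}=\mathbb{D}^{\,\mathrm{o}}_{2k+2}$ otherwise. Let $Y_{\eta^*}$ be the Young diagram whose main diagonal consists of exactly the cells $c_{1,1},\dots,c_{l+1,l+1}$ and which satisfies $h_{1,1}=2n-5$, $h_{i,i}=\eta_{l-(i-2)}$ for $2\le i\le l+1$, and $a(c_{i,i})=l(c_{i,i})$ for $1\le i\le l+1$. Let $\lambda$ be the partition whose parts are the hook lengths of the first-column cells of $Y_{\eta^*}$. Then: (1) $\lambda$ has exactly $n-2$ parts; (2) its largest part is $\lambda_{n-2}=2n-5$; (3) $\#\mathcal{M}_\lambda=n-3$.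
   Context: $\mathbb{D}^{\,\mathrm{o}}_N$ is the set of partitions of $N$ into distinct odd parts, i.e. sequences $(\eta_1<\dots<\eta_l)$ of odd positive integers with sum $N$ and $l\ge 2$. For a partition $\lambda=(\lambda_1<\dots<\lambda_t)$ into distinct parts, $\mathcal{M}_\lambda=\{1,\dots,\lambda_t\}\setminus\{\lambda_1,\dots,\lambda_t\}$. Young diagrams are in English convention: rows top to bottom, columns left to right, $c_{i,j}$ the cell in row $i$, column $j$; arm $a(c_{i,j})$ = number of cells to its right in its row, leg $l(c_{i,j})$ = number of cells below it in its column, hook length $h_{i,j}=a+l+1$. *)

(* Defs.v *)
From mathcomp Require Import all_boot.
Set Implicit Arguments. Unset Strict Implicit. Unset Printing Implicit Defensive.

(* A Young diagram (English convention) is given by its sequence of row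
   lengths Y = [:: r_1; r_2; ...], nonincreasing, all positive.
   Rows and columns are 1-indexed: cell c_{i,j} is in Y iff
   1 <= i <= #rows and 1 <= j <= r_i. *)
Definition is_young (Y : seq nat) : bool :=
  sorted geq Y && all (fun r => 0 < r) Y.

Definition row_len (Y : seq nat) (i : nat) : nat := nth 0 Y i.-1.

Definition in_diagram (Y : seq nat) (i j : nat) : bool :=
  (1 <= i <= size Y) && (1 <= j <= row_len Y i).

Definition arm (Y : seq nat) (i j : nat) : nat := row_len Y i - j.
Definition leg (Y : seq nat) (i j : nat) : nat := count (fun r => j <= r) (drop i Y).
Definition hook (Y : seq nat) (i j : nat) : nat := arm Y i j + leg Y i j + 1.

Definition first_col_hooks (Y : seq nat) : seq nat :=
  [seq hook Y i 1 | i <- iota 1 (size Y)].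

Definition hook_partition (Y : seq nat) : seq nat := sort leq (first_col_hooks Y).

Definition missing (lam : seq nat) : seq nat :=
  [seq m <- iota 1 (last 0 lam) | m \notin lam].

Definition distinct_odd_partition (N : nat) (eta : seq nat) : bool :=
  [&& sorted ltn eta, all odd eta, sumn eta == N & 2 <= size eta].

(* Main.v *)
Require Import Defs.
From mathcomp Require Import all_boot.
From mathcomp Require Import zify.

Lemma leg1 (Y : seq nat) i : is_young Y -> leg Y i 1 = size Y - i.
Proof.
case/andP=> _ /allP pos; rewrite /leg -size_drop.
rewrite -[RHS](count_predT (drop i Y)); apply: eq_in_count => x /mem_drop /pos.
by [].
Qed.

Lemma hook1 (Y : seq nat) i : is_young Y -> 1 <= i <= size Y ->
  hook Y i 1 = nth 0 Y i.-1 + (size Y - i).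
Proof.
move=> yY /andP[]; case: i => [|i] // _ iS; rewrite /hook leg1 // /arm /row_len.
have : 0 < nth 0 Y i.
  case/andP: yY => _ /allP; apply; exact: mem_nth.
rewrite /=; lia.
Qed.

Lemma le_last (s : seq nat) x : sorted leq s -> x \in s -> x <= last 0 s.
Proof.
elim: s => [|a s IH] //= Hp; rewrite inE => /orP[/eqP->|xs].
  case: s Hp {IH} => [|b s] //= /andP[ab Hp].
  have := order_path_min leq_trans Hp.
  move=> /allP H; case: (lastP s) H => [|s' c] //= H.
  rewrite last_rcons; apply: (leq_trans ab); apply: H; rewrite mem_rcons inE eqxx //.
have Hs : sorted leq s by case: s Hp {IH xs} => //= b s /andP[].
have := IH Hs xs; case: s Hp Hs xs {IH} => //.
Qed.

Theorem corollary4p9 (n k : nat) (eta Y : seq nat) :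
  2 <= 2 * k -> 2 * k <= n - 4 ->
  distinct_odd_partition (2 * k + 2) eta ->
  (2 * k = n - 4 -> eta <> [:: 1; 2 * k + 1]) ->
  is_young Y ->
  (forall i, 1 <= i -> in_diagram Y i i = (i <= size eta + 1)) ->
  hook Y 1 1 = 2 * n - 5 ->
  (forall i, 2 <= i <= size eta + 1 -> hook Y i i = nth 0 eta (size eta + 1 - i)) ->
  (forall i, 1 <= i <= size eta + 1 -> arm Y i i = leg Y i i) ->
  let lam := hook_partition Y in
  [/\ size lam = n - 2,
      nth 0 lam (n - 3) = 2 * n - 5
    & size (missing lam) = n - 3].
Proof.
move=> k1 kn _ _ yY Hd Hh _ Ha lam.
have S1 : 1 <= size Y.
  have := Hd 1 isT; rewrite addn1 ltnS leq0n /in_diagram /=; by case/andP.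
have Hsz : size Y = n - 2.
  have := Ha 1; rewrite addn1 ltnS leq0n => /(_ isT); move: Hh.
  rewrite /hook leg1 // => Hh Ha1; lia.
have Hf : forall i, 1 <= i <= size Y -> forall j, i <= j <= size Y -> hook Y j 1 <= hook Y i 1 ?= iff (i == j).
  move=> i Hi j Hj; rewrite !hook1 //; last lia.
  have : nth 0 Y j.-1 <= nth 0 Y i.-1.
    case/andP: yY => sY _.
    have := @sorted_leq_nth _ geq (fun a b c h1 h2 => leq_trans h2 h1) leqnn 0 Y sY i.-1 j.-1.
    rewrite !inE; case: i Hi Hj => [|i] //; case: j => [|j] //= Hi Hj; apply; lia.
  move=> Hle; split; first lia.
  apply/idP/idP => /eqP E; apply/eqP; [lia | by rewrite E].
set F := first_col_hooks Y.
have Fu : uniq F.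
  rewrite /F /first_col_hooks map_inj_in_uniq ?iota_uniq // => i j.
  rewrite !mem_iota => Hi Hj Heq.
  case: (leqP i j) => ij.
    have := Hf i ltac:(lia) j ltac:(lia); rewrite Heq => -[_]; rewrite eqxx => /esym/eqP //.
  have := Hf j ltac:(lia) i ltac:(lia); rewrite Heq => -[_]; rewrite eqxx => /esym/eqP //.
have Fr : forall x, x \in F -> 1 <= x <= 2 * n - 5.
  move=> x /mapP[i]; rewrite mem_iota => Hi ->; rewrite -Hh.
  have [H _] := Hf 1 ltac:(lia) i ltac:(lia).
  rewrite /hook in H *; lia.
have Fm : 2 * n - 5 \in F.
  rewrite -Hh; apply/mapP; exists 1 => //; rewrite mem_iota; lia.
have Ls : sorted leq lam by apply: sort_sorted; exact: leq_total.
have lamE : lam =i F by apply: mem_sort.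
have Lz : size lam = n - 2 by rewrite size_sort size_map size_iota.
have Llast : last 0 lam = 2 * n - 5.
  apply/eqP; rewrite eqn_leq; apply/andP; split.
    have := mem_last 0 lam; rewrite inE => /orP[/eqP->//|].
    by rewrite lamE => /Fr /andP[].
  by apply: le_last => //; rewrite lamE.
have Lu : uniq lam by rewrite sort_uniq.
split => //.
  have -> : n - 3 = (size lam).-1 by rewrite Lz; lia.
  by rewrite nth_last.
rewrite /missing Llast size_filter.
have := count_predC (mem lam) (iota 1 (2 * n - 5)).
have -> : count (mem lam) (iota 1 (2 * n - 5)) = size lam.
  rewrite -size_filter; apply: perm_size; apply: uniq_perm.
  - by apply: filter_uniq; apply: iota_uniq.
  - exact: Lu.
  move=> x; rewrite mem_filter mem_iota /=.
  case E: (x \in lam) => //=.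
  by move: E; rewrite lamE => /Fr; lia.
rewrite size_iota Lz => H.
have -> : count (fun m => m \notin lam) (iota 1 (2 * n - 5)) = count (predC (mem lam)) (iota 1 (2 * n - 5)) by [].
lia.
Qed.
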